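(* Let $B$ be a triangulated closed oriented two-dimensional surface, with all triangles oriented consistently with $B$. (1) Consistent collections of framed small necklaces over the simplices of $B$ (equivalently, small framed semisimplicial triangulations of circle bundles over $B$) are in natural bijection with $Or(B)$, the set of orientations of the edges of $B$; the bijection sends a collection to the edge orientations induced by its framings. (2) If $a\in Or(B)$, viewed as a $1$-cochain with values $\pm1$, then the $2$-cochain $\mathcal{F}(da)$ represents the Euler class of the circle bundle determined by the collection of framed small necklaces corresponding to $a$.
   Context: Necklaces: given a semisimplicially triangulated circle bundle $\pi:E\to B$ and a $k$-simplex $\sigma$ of $B$, each $(k+1)$-simplex $\rho$ of $E$ over $\sigma$ has exactly one vertex of $\sigma$ whose preimage in $\rho$ is an edge; label $\rho$ by that vertex. The fibre over an interior point of $\sigma$ is a circle meeting these simplices in a cyclic order; the resulting cyclic word of labels (beads colored by vertices of $\sigma$) is the necklace $\mathcal{O}(\sigma)$. For a face $\tau\subset\sigma$, $\mathcal{O}(\tau)$ is obtained from $\mathcal{O}(\sigma)$ by deleting beads whose colors are not vertices of $\tau$, giving an injective order-preserving morphism $\mathcal{O}(\tau)\to\mathcal{O}(\sigma)$; these morphisms compose consistently. Conversely, a consistent collection of necklaces and morphisms over the simplices of $B$ determines a semisimplicially triangulated circle bundle over $B$. A small necklace has exactly two beads of each color and is invariant under rotation by half its length; it is framed if one bead of each color is marked bold, and a collection of framed necklaces is consistent if the morphisms send bold beads to bold beads. For an edge $ij$ the framed necklace has form $ijij$, and the edge is oriented $i\to j$ iff the bead immediately following the bold $i$ in the positive direction is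 the bold $j$. Elements of $Or(B)$ are identified with $1$-cochains $a$ taking values $\pm1$ ($a$ is $+1$ on an oriented edge iff the chosen orientation agrees with it). $d$ is the simplicial coboundary. $\mathcal{F}:\{\pm1,\pm3\}\to\{\pm1/4\}$ is defined by $\mathcal{F}(3)=\mathcal{F}(-1)=1/4$, $\mathcal{F}(-3)=\mathcal{F}(1)=-1/4$, applied valuewise. Sign convention for the Euler class: it is the class represented by the local-formula cocycle $\varepsilon$, where for an oriented triangle with vertices $0,1,2$ in the order of its orientation, $\varepsilon=\frac{\#(\mathrm{neg})-\#(\mathrm{pos})}{2\#(0)\#(1)\#(2)}$, a triple of distinctly colored beads being positive iff it reads $0,1,2$ in cyclic order along the positive direction. *)

(* Defs.v *)
From HB Require Import structures.
From mathcomp Require Import all_boot all_order all_algebra.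
Set Implicit Arguments. Unset Strict Implicit. Unset Printing Implicit Defensive.
Import Order.TTheory GRing.Theory Num.Theory.

Section Defs.
Variable V : finType.

(* ---------- The triangulated closed oriented surface B ----------
   S2   : the set of triangles (2-simplices), each a 3-element vertex set.
   ori  : ori x y z  means [x;y;z] is a triangle and (x,y,z) lists its
          vertices in the order of its (chosen, consistent) orientation. *)

Definition is_edge (S2 : {set {set V}}) (x y : V) : bool :=
  (x != y) && [exists t in S2, (x \in t) && (y \in t)].

Definition is_simplex (S2 : {set {set V}}) (s : {set V}) : bool :=
  (s != set0) && [exists t in S2, s \subset t].

Definition link_rel (S2 : {set {set V}}) (v : V) : rel V :=
  fun u w => [&& u != v, w != v, u != w & [set v; u; w] \in S2].

Definition closed_oriented_surface (S2 : {set {set V}})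
    (ori : V -> V -> V -> bool) : Prop :=
  (forall t, t \in S2 -> #|t| = 3) /\
  (forall v : V, exists2 t, t \in S2 & v \in t) /\
  (forall x y z, ori x y z -> [set x; y; z] \in S2 /\ #|[set x; y; z]| = 3) /\
  (forall x y z, ori x y z -> ori y z x) /\
  (forall x y z, [set x; y; z] \in S2 -> #|[set x; y; z]| = 3 ->
     ori x y z != ori x z y) /\
  (* closed surface, consistently oriented: every oriented edge (x,y) of B
     lies in exactly one positively oriented triangle (so each edge lies in
     exactly two triangles, inducing opposite orientations on it) *)
  (forall x y, is_edge S2 x y -> #|[set z | ori x y z]| = 1) /\
  (* the link of every vertex is connected (hence a circle) *)
  (forall v u w, is_edge S2 v u -> is_edge S2 v w -> connect (link_rel S2 v) u w).

Definition is_orientation (S2 : {set {set V}}) (a : V -> V -> int) : Prop :=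
  forall x y, is_edge S2 x y -> (a x y = 1 \/ a x y = -1)%R /\ a y x = (- a x y)%R.

Definition cobound {R : zmodType} (a : V -> V -> R) (x y z : V) : R :=
  (a y z - a x z + a x y)%R.

(* ---------- Necklaces ----------
   A necklace over a simplex is a cyclic word of colours (vertices), stored
   as a sequence s; beads are the indices i < size s and the positive
   direction of the fibre is increasing index (mod size s). *)

Definition cyc (i j k : nat) : bool :=
  [|| (i < j < k)%N, (j < k < i)%N | (k < i < j)%N].

(* f : O(tau) -> O(sigma) is an injective, colour- and cyclic-order-
   preserving map whose image is exactly the set of beads with colours in
   tau; i.e. O(tau) is O(sigma) with the other beads deleted. *)
Definition neck_morphism (tau : {set V}) (s s' : seq V) (f : nat -> nat) : Prop :=
  (forall i, (i < size s)%N -> (f i < size s')%N) /\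
  (forall i j, (i < size s)%N -> (j < size s)%N -> f i = f j -> i = j) /\
  (forall i, (i < size s)%N -> onth s' (f i) = onth s i) /\
  (forall j c, onth s' j = Some c -> c \in tau ->
     exists2 i, (i < size s)%N & f i = j) /\
  (forall i j k, (i < size s)%N -> (j < size s)%N -> (k < size s)%N ->
     cyc (f i) (f j) (f k) = cyc i j k).

(* A collection of framed necklaces over the simplices of B:
   neck s      the necklace O(s),
   mor t s     the morphism O(t) -> O(s) for a face t of s,
   bold s v    the (index of the) bold bead of colour v in O(s). *)
Record collection := Collection {
  neck : {set V} -> seq V;
  mor : {set V} -> {set V} -> nat -> nat;
  bold : {set V} -> V -> nat }.

Definition framed_small_collection (S2 : {set {set V}}) (C : collection) : Prop :=
  (forall t s, is_simplex S2 t -> is_simplex S2 s -> t \proper s ->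
     neck_morphism t (neck C t) (neck C s) (mor C t s)) /\
  (forall t r s, is_simplex S2 t -> is_simplex S2 r -> is_simplex S2 s ->
     t \proper r -> r \proper s ->
     forall i, (i < size (neck C t))%N -> mor C t s i = mor C r s (mor C t r i)) /\
  (forall s, is_simplex S2 s ->
     [/\ all (fun c => c \in s) (neck C s),
         forall v, v \in s -> count_mem v (neck C s) = 2%N &
         rot (size (neck C s) %/ 2) (neck C s) = neck C s]) /\
  (forall s v, is_simplex S2 s -> v \in s ->
     (bold C s v < size (neck C s))%N /\ onth (neck C s) (bold C s v) = Some v) /\
  (forall t s v, is_simplex S2 t -> is_simplex S2 s -> t \proper s -> v \in t ->
     mor C t s (bold C t v) = bold C s v).

Definition iso_collection (S2 : {set {set V}}) (C C' : collection) : Prop :=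
  exists phi : {set V} -> nat -> nat, forall s, is_simplex S2 s ->
    size (neck C' s) = size (neck C s) /\
    neck_morphism s (neck C s) (neck C' s) (phi s) /\
    (forall v, v \in s -> phi s (bold C s v) = bold C' s v) /\
    (forall t, is_simplex S2 t -> t \proper s ->
       forall i, (i < size (neck C t))%N ->
         phi s (mor C t s i) = mor C' t s (phi t i)).

Definition edge_or (C : collection) (x y : V) : int :=
  let e := [set x; y] in
  if (bold C e x).+1 %% size (neck C e) == bold C e y then 1%R else (-1)%R.

Definition npos (s : seq V) (x y z : V) : nat :=
  (\sum_(i < size s) \sum_(j < size s) \sum_(k < size s)
     [&& onth s i == Some x, onth s j == Some y, onth s k == Some z
       & cyc i j k])%N.

Definition nneg (s : seq V) (x y z : V) : nat :=
  (\sum_(i < size s) \sum_(j < size s) \sum_(k < size s)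
     [&& onth s i == Some x, onth s j == Some y, onth s k == Some z
       & ~~ cyc i j k])%N.

Definition euler_cocycle (C : collection) (x y z : V) : rat :=
  let s := neck C [set x; y; z] in
  ((nneg s x y z)%:R - (npos s x y z)%:R) /
  (2 * count_mem x s * count_mem y s * count_mem z s)%N%:R.

Definition Fq (n : int) : rat :=
  if (n == 3%R) || (n == (-1)%R) then (1 / 4)%R
  else if (n == (-3)%R) || (n == 1%R) then (- (1 / 4))%R else 0%R.

(* the 2-cochain c represents the same class in H^2(B; Q) as the Euler
   cocycle of C: they differ by the coboundary of a rational 1-cochain *)
Definition represents_euler_class (S2 : {set {set V}}) (ori : V -> V -> V -> bool)
    (C : collection) (c : V -> V -> V -> rat) : Prop :=
  exists b : V -> V -> rat,
    (forall x y, is_edge S2 x y -> b y x = (- b x y)%R) /\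
    (forall x y z, ori x y z -> c x y z = (euler_cocycle C x y z + cobound b x y z)%R).

End Defs.

(* Main.v *)
Require Import Defs.
From HB Require Import structures.
From mathcomp Require Import all_boot all_order all_algebra.
From mathcomp Require Import zify.
Import Order.TTheory GRing.Theory Num.Theory.

Set Implicit Arguments. Unset Strict Implicit. Unset Printing Implicit Defensive.

Lemma sum_ordE n (F : nat -> nat) : (\sum_(i < n) F i = sumn [seq F i | i <- iota 0 n])%N.
Proof. by rewrite -(big_mkord xpredT) sumnE big_map /index_iota subn0. Qed.

Definition other (k b : nat) := ((b + k) %% (2 * k))%N.

Definition smallP {V : finType} (t : {set V}) (s : seq V) (b : V -> nat) : Prop :=
  [/\ size s = (2 * #|t|)%N, (0 < #|t| <= 3)%N,
      (forall i j, i < size s -> j < size s ->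
          (onth s i == onth s j) = (i %% #|t| == j %% #|t|)),
      (forall i c, onth s i = Some c -> c \in t) &
      (forall c, c \in t -> b c < size s /\ onth s (b c) = Some c)].

Lemma onth_some {T : Type} (x0 : T) s i : i < size s -> onth s i = Some (nth x0 s i).
Proof. by elim: s i => [|a s IH] [|i] //= /IH. Qed.

Lemma onth_lt {T : Type} (s : seq T) i c : onth s i = Some c -> i < size s.
Proof. by move=> h; rewrite -onthTE h. Qed.

Lemma onth_mem {T : eqType} (s : seq T) i c : onth s i = Some c -> c \in s.
Proof. by move=> h; rewrite -(@onth_nth _ c c s i h) mem_nth // (onth_lt h). Qed.

Lemma size_count {V : finType} (t : {set V}) (s : seq V) :
  all (fun c => c \in t) s -> size s = (\sum_(v in t) count_mem v s)%N.
Proof.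
elim: s => [|c s IH] /=; first by rewrite big1.
case/andP=> ct /IH ->.
rewrite big_split /= -add1n; congr (_ + _).
rewrite (bigD1 c) //= eqxx big1 // => v /andP[_ /negbTE].
by rewrite eq_sym => ->.
Qed.

Lemma small_struct {V : finType} (t : {set V}) (s : seq V) :
  (0 < #|t|)%N -> all (fun c => c \in t) s -> (forall v, v \in t -> count_mem v s = 2) ->
  rot (size s %/ 2) s = s ->
  size s = (2 * #|t|)%N /\ forall i j, i < size s -> j < size s ->
     (onth s i == onth s j) = (i %% #|t| == j %% #|t|).
Proof.
move=> tpos hall hcnt hrot.
have hsz : size s = (2 * #|t|)%N.
  rewrite (size_count hall) (eq_bigr (fun _ => 2%N)); last by move=> v /hcnt.
  by rewrite sum_nat_const mulnC.
split=> //.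
set k := #|t| in hsz tpos hcnt *.
have hk : (size s %/ 2 = k)%N by rewrite hsz mulKn.
rewrite hk in hrot.
set w := take k s.
have hd : drop k s = w.
  have e1 : drop k s ++ take k s = take k s ++ drop k s by rewrite cat_take_drop.
  have := e1; move/eqP; rewrite eqseq_cat; first by case/andP=> /eqP.
  rewrite size_drop size_takel hsz; lia.
have hs : s = w ++ w by rewrite -{1}(cat_take_drop k s) hd.
have hw : size w = k by rewrite size_takel // hsz; lia.
case/card_gt0P: tpos => x0 _.
have hcw : forall v, v \in t -> count_mem v w = 1%N.
  move=> v /hcnt; rewrite hs count_cat; lia.
have uw : uniq w.
  apply/card_uniqP; rewrite hw /k; apply: eq_card => v.
  apply/idP/idP.
  - by move=> vw; apply: (allP hall); rewrite hs mem_cat vw.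
  - move=> /hcw h; apply/negPn/negP => /count_memPn; lia.
have key : forall i, i < size s -> onth s i = Some (nth x0 w (i %% k)).
  move=> i hi; rewrite (onth_some x0 hi) {1}hs nth_cat hw.
  case: ltnP => hik; first by rewrite modn_small.
  congr (Some (nth _ _ _)); rewrite hsz in hi.
  rewrite -{2}(subnK hik) modnDr modn_small //; lia.
move=> i j hi hj; rewrite (key i hi) (key j hj) inj_eq; last by move=> ? ? [].
rewrite nth_uniq // hw; apply: ltn_pmod; lia.
Qed.


Lemma k123 (k : nat) : (0 < k <= 3)%N -> k = 1%N \/ k = 2%N \/ k = 3%N.
Proof. lia. Qed.

Lemma small_bead {V : finType} (t : {set V}) s b i c :
  smallP t s b -> onth s i = Some c -> c \in t /\ (i = b c \/ i = other #|t| (b c)).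
Proof.
case=> hsz hk hres hcol hb hi.
have ct := hcol _ _ hi; split=> //.
have [bl bo] := hb c ct.
have il := onth_lt hi.
have := hres i (b c) il bl; rewrite hi bo eqxx => /esym/eqP.
rewrite /other; rewrite hsz in il bl.
by case: (k123 hk) => [e|[e|e]]; rewrite e in il bl *; lia.
Qed.

Lemma small_other {V : finType} (t : {set V}) s b c : smallP t s b -> c \in t ->
  [/\ other #|t| (b c) < size s, onth s (other #|t| (b c)) = Some c
    & other #|t| (b c) != b c].
Proof.
case=> hsz hk hres hcol hb ct.
have [bl bo] := hb c ct.
have ol : other #|t| (b c) < size s.
  by rewrite hsz /other ltn_pmod // muln_gt0; case/andP: hk => ->.
split=> //.
- rewrite -bo; apply/eqP; rewrite hres //.
  rewrite hsz in bl; rewrite /other.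
  by case: (k123 hk) => [e|[e|e]]; rewrite e in bl *; apply/eqP; lia.
- rewrite hsz in bl; rewrite /other.
  by case: (k123 hk) => [e|[e|e]]; rewrite e in bl *; apply/eqP; lia.
Qed.

Lemma small_bold {V : finType} (t : {set V}) s b c : smallP t s b -> c \in t ->
  b c < size s /\ onth s (b c) = Some c.
Proof. by case=> _ _ _ _ hb /hb. Qed.

Lemma morph_val {V : finType} (tau t1 t2 : {set V}) s1 s2 b1 b2 f i c :
  neck_morphism tau s1 s2 f -> smallP t1 s1 b1 -> smallP t2 s2 b2 ->
  f (b1 c) = b2 c -> onth s1 i = Some c ->
  f i = if i == b1 c then b2 c else other #|t2| (b2 c).
Proof.
case=> fr [fi [fc _]] h1 h2 e hi.
case: (small_bead h1 hi) => ct [E|E]; first by rewrite E eqxx.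
have [ol oo ne] := small_other h1 ct.
have [bl bo] := small_bold h1 ct.
rewrite E (negbTE ne).
have hfo : onth s2 (f (other #|t1| (b1 c))) = Some c by rewrite fc.
case: (small_bead h2 hfo) => _ [E2|E2] //.
by move: ne; rewrite (fi _ _ ol bl) ?eqxx // E2 e.
Qed.

Definition transport {V : eqType} (s1 : seq V) (b1 : V -> nat) (k2 : nat) (b2 : V -> nat) i :=
  match onth s1 i with
  | Some c => if i == b1 c then b2 c else other k2 (b2 c)
  | None => 0%N end.

Lemma transport_val {V : finType} (t1 t2 : {set V}) s1 s2 b1 b2 i c :
  smallP t1 s1 b1 -> smallP t2 s2 b2 -> t1 \subset t2 -> onth s1 i = Some c ->
  [/\ transport s1 b1 #|t2| b2 i < size s2,
      onth s2 (transport s1 b1 #|t2| b2 i) = Some c,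
      (transport s1 b1 #|t2| b2 i == b2 c) = (i == b1 c) &
      transport s1 b1 #|t2| b2 i = if i == b1 c then b2 c else other #|t2| (b2 c)].
Proof.
move=> h1 h2 sub hi.
have ct : c \in t2 by apply: (subsetP sub); case: (small_bead h1 hi).
have [bl bo] := small_bold h2 ct.
have [ol oo ne] := small_other h2 ct.
rewrite /transport hi; case: eqP => _ //; split=> //; first by rewrite eqxx.
by rewrite (negbTE ne).
Qed.

Lemma bead_eq {V : finType} (t : {set V}) s b i j c :
  smallP t s b -> onth s i = Some c -> onth s j = Some c ->
  (i == b c) = (j == b c) -> i = j.
Proof.
move=> h hi hj.
case: (small_bead h hi) => ct [->|->]; case: (small_bead h hj) => _ [->|->] //.
- by have [_ _ ne] := small_other h ct; rewrite eqxx (negbTE ne).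
- by have [_ _ ne] := small_other h ct; rewrite eqxx (negbTE ne).
Qed.

Lemma transport_morph {V : finType} (t1 t2 : {set V}) s1 s2 b1 b2 :
  smallP t1 s1 b1 -> smallP t2 s2 b2 -> t1 \subset t2 ->
  (forall i j k, i < size s1 -> j < size s1 -> k < size s1 ->
     cyc (transport s1 b1 #|t2| b2 i) (transport s1 b1 #|t2| b2 j)
         (transport s1 b1 #|t2| b2 k) = cyc i j k) ->
  neck_morphism t1 s1 s2 (transport s1 b1 #|t2| b2).
Proof.
move=> h1 h2 sub hcyc.
have col : forall i, i < size s1 -> exists c, onth s1 i = Some c.
  by move=> i il; rewrite -onthTE in il; case: (onth s1 i) il => // c; exists c.
split; [|split; [|split; [|split]]] => //.
- by move=> i /col [c hc]; case: (transport_val h1 h2 sub hc).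
- move=> i j /col [c hc] /col [d hd] e.
  have [_ o1 q1 _] := transport_val h1 h2 sub hc.
  have [_ o2 q2 _] := transport_val h1 h2 sub hd.
  have cd : c = d by move: o1; rewrite e o2 => [[]].
  subst d; apply: (bead_eq h1 hc hd); by rewrite -q1 -q2 e.
- by move=> i /col [c hc]; case: (transport_val h1 h2 sub hc) => _ -> _ _.
- move=> j c hj ct.
  have ct2 : c \in t2 by apply: (subsetP sub).
  have [bl bo] := small_bold h1 ct.
  have [ol oo ne] := small_other h1 ct.
  case: (small_bead h2 hj) => _ [->|->].
  + exists (b1 c) => //; by case: (transport_val h1 h2 sub bo) => _ _ _ ->; rewrite eqxx.
  + exists (other #|t1| (b1 c)) => //.
    by case: (transport_val h1 h2 sub oo) => _ _ _ ->; rewrite (negbTE ne).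
Qed.


Definition G3 (P : bool -> bool) (px py pz : nat) : nat :=
  (\sum_(i < 6) \sum_(j < 6) \sum_(k < 6)
     [&& i %% 3 == px, j %% 3 == py, k %% 3 == pz & P (cyc i j k)])%N.

Definition G3s (P : bool -> bool) (px py pz : nat) : nat :=
  sumn [seq sumn [seq sumn [seq nat_of_bool [&& i %% 3 == px, j %% 3 == py, k %% 3 == pz & P (cyc i j k)]
     | k <- iota 0 6] | j <- iota 0 6] | i <- iota 0 6].

Lemma sum3E n (F : nat -> nat -> nat -> nat) :
  (\sum_(i < n) \sum_(j < n) \sum_(k < n) F i j k)%N =
  sumn [seq sumn [seq sumn [seq F i j k | k <- iota 0 n] | j <- iota 0 n] | i <- iota 0 n].
Proof.
rewrite (sum_ordE n (fun i => \sum_(j < n) \sum_(k < n) F i j k)); congr sumn; apply: eq_map => i /=.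
rewrite (sum_ordE n (fun j => \sum_(k < n) F i j k)); congr sumn; apply: eq_map => j /=.
by rewrite (sum_ordE n (F i j)).
Qed.

Lemma G3E P px py pz : G3 P px py pz = G3s P px py pz.
Proof.
exact: (sum3E 6 (fun i j k => nat_of_bool [&& i %% 3 == px, j %% 3 == py, k %% 3 == pz & P (cyc i j k)])).
Qed.

Definition Aof (u v : nat) : int := if cyc u v (other 3 u) then 1%R else (-1)%R.

Definition chk2 := all (fun bx => all (fun by_ => all (fun bz =>
  (bx %% 3 != by_ %% 3) ==> (bx %% 3 != bz %% 3) ==> (by_ %% 3 != bz %% 3) ==>
  let d := (Aof by_ bz - Aof bx bz + Aof bx by_)%R in
  [|| [&& G3s negb (bx %% 3) (by_ %% 3) (bz %% 3) == 2%N, G3s id (bx %% 3) (by_ %% 3) (bz %% 3) == 6%N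
       & (d == 1%R) || (d == (-3)%R)]
    | [&& G3s negb (bx %% 3) (by_ %% 3) (bz %% 3) == 6%N, G3s id (bx %% 3) (by_ %% 3) (bz %% 3) == 2%N
       & (d == (-1)%R) || (d == 3%R)]]) (iota 0 6)) (iota 0 6)) (iota 0 6).

Lemma chk2_ok : chk2. Proof. vm_compute. reflexivity. Qed.


Lemma morph_other {V : finType} (tau t1 t2 : {set V}) s1 s2 b1 b2 f c :
  neck_morphism tau s1 s2 f -> smallP t1 s1 b1 -> smallP t2 s2 b2 -> c \in t1 ->
  f (b1 c) = b2 c -> f (other #|t1| (b1 c)) = other #|t2| (b2 c).
Proof.
move=> hf h1 h2 ct e.
have [ol oo ne] := small_other h1 ct.
by rewrite (morph_val hf h1 h2 e oo) (negbTE ne).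
Qed.

Lemma in2l {V : finType} (x y : V) : x \in [set x; y]. Proof. by rewrite !inE eqxx. Qed.
Lemma in2r {V : finType} (x y : V) : y \in [set x; y]. Proof. by rewrite !inE eqxx orbT. Qed.

Lemma edge_or_small {V : finType} (C : collection V) (x y : V) : x != y ->
  smallP [set x; y] (neck C [set x; y]) (bold C [set x; y]) ->
  edge_or C x y = if cyc (bold C [set x; y] x) (bold C [set x; y] y)
                        (other 2 (bold C [set x; y] x)) then 1%R else (-1)%R.
Proof.
move=> xy h.
have [bxl bxo] := small_bold h (in2l x y).
have [byl byo] := small_bold h (in2r x y).
case: h => hsz _ hres _ _.
have c2 : #|[set x; y]| = 2 by rewrite cards2 xy.
rewrite c2 in hsz hres.
have hne := hres _ _ bxl byl; rewrite bxo byo in hne; move: hne; rewrite (inj_eq (@Some_inj _)) (negbTE xy) => hne.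
rewrite /edge_or hsz; rewrite hsz in bxl byl.
move: (bold C [set x; y] x) (bold C [set x; y] y) bxl byl hne => a b al bl hne.
congr (if _ then _ else _); rewrite /other /cyc; lia.
Qed.

Lemma edge_or_face {V : finType} (C : collection V) (x y : V) (s : {set V}) f :
  x != y -> smallP [set x; y] (neck C [set x; y]) (bold C [set x; y]) ->
  smallP s (neck C s) (bold C s) ->
  neck_morphism [set x; y] (neck C [set x; y]) (neck C s) f ->
  f (bold C [set x; y] x) = bold C s x -> f (bold C [set x; y] y) = bold C s y ->
  edge_or C x y = if cyc (bold C s x) (bold C s y) (other #|s| (bold C s x))
                  then 1%R else (-1)%R.
Proof.
move=> xy he hs hf ex ey.
rewrite (edge_or_small xy he); congr (if _ then _ else _).
have c2 : #|[set x; y]| = 2 by rewrite cards2 xy.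
have [ol _ _] := small_other he (in2l x y).
have [bxl _] := small_bold he (in2l x y).
have [byl _] := small_bold he (in2r x y).
have fo := morph_other hf he hs (in2l x y) ex.
rewrite c2 in fo ol.
case: hf => _ [_ [_ [_ hc]]].
by rewrite -fo -ex -ey hc.
Qed.

Lemma edge_or_anti {V : finType} (C : collection V) (x y : V) : x != y ->
  smallP [set x; y] (neck C [set x; y]) (bold C [set x; y]) ->
  (edge_or C x y = 1%R \/ edge_or C x y = (-1)%R) /\ edge_or C y x = (- edge_or C x y)%R.
Proof.
move=> xy h.
have yx : y != x by rewrite eq_sym.
have h' : smallP [set y; x] (neck C [set y; x]) (bold C [set y; x]) by rewrite setUC.
rewrite (edge_or_small xy h) (edge_or_small yx h').
split; first by case: ifP; [left|right].
have [bxl bxo] := small_bold h (in2l x y).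
have [byl byo] := small_bold h (in2r x y).
case: h => hsz _ hres _ _.
have c2 : #|[set x; y]| = 2 by rewrite cards2 xy.
rewrite c2 in hsz hres.
have hne := hres _ _ bxl byl; rewrite bxo byo in hne; move: hne; rewrite (inj_eq (@Some_inj _)) (negbTE xy) => hne.
rewrite hsz in bxl byl.
rewrite setUC.
move: (bold C [set x; y] x) (bold C [set x; y] y) bxl byl hne => a b al bl hne.
have -> : cyc b a (other 2 b) = ~~ cyc a b (other 2 a) by rewrite /other /cyc; lia.
by case: (cyc a b _).
Qed.


Lemma card3 {V : finType} (x y z : V) : #|[set x; y; z]| = 3 -> [/\ x != y, y != z & x != z].
Proof.
rewrite (setUC ([set x] :|: [set y])) cardsU1 cardsU1 cards1 !inE.
case: (eqVneq x y) => xy; case: (eqVneq y z) => yz; case: (eqVneq x z) => xz //=;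
  subst; rewrite ?eqxx //= in xy yz xz *.
Qed.

Lemma simplex_card {V : finType} (S2 : {set {set V}}) ori s :
  closed_oriented_surface S2 ori -> is_simplex S2 s -> (0 < #|s| <= 3)%N.
Proof.
case=> h3 _; case/andP=> ne /existsP [t /andP [tS st]].
by rewrite card_gt0 ne /= -(h3 t tS); apply: subset_leq_card.
Qed.

Lemma fsc_small {V : finType} (S2 : {set {set V}}) ori (C : collection V) s :
  closed_oriented_surface S2 ori -> framed_small_collection S2 C -> is_simplex S2 s ->
  smallP s (neck C s) (bold C s).
Proof.
move=> hsurf hC hs.
case: hC => _ [_ [hsm [hfr _]]].
have [hall hcnt hrot] := hsm s hs.
have k := simplex_card hsurf hs.
have [hsz hres] := small_struct (proj1 (andP k)) hall hcnt hrot.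
split => //.
- by move=> i c /onth_mem; apply: (allP hall).
- by move=> c cs; apply: hfr.
Qed.

Lemma sub_simplex {V : finType} (S2 : {set {set V}}) (s A : {set V}) :
  is_simplex S2 s -> A \subset s -> A != set0 -> is_simplex S2 A.
Proof.
case/andP=> _ /existsP [t /andP [tS st]] As An.
rewrite /is_simplex An /=; apply/existsP; exists t; rewrite tS /=.
exact: subset_trans As st.
Qed.

Lemma set2_sub {V : finType} (u v : V) (s : {set V}) :
  u \in s -> v \in s -> [set u; v] \subset s.
Proof. by move=> us vs; apply/subsetP => w; rewrite !inE => /orP [] /eqP ->. Qed.

Lemma set2_ne0 {V : finType} (u v : V) : [set u; v] != set0.
Proof. by apply/set0Pn; exists u; rewrite in2l. Qed.

Lemma edge_of_simplex {V : finType} (S2 : {set {set V}}) s u v :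
  is_simplex S2 s -> u \in s -> v \in s -> u != v -> is_edge S2 u v.
Proof.
case/andP=> _ /existsP [t /andP [tS st]] us vs uv.
rewrite /is_edge uv /=; apply/existsP; exists t.
by rewrite tS !(subsetP st).
Qed.

Lemma edge_simplex {V : finType} (S2 : {set {set V}}) u v :
  is_edge S2 u v -> is_simplex S2 [set u; v].
Proof.
case/andP=> _ /existsP [t /and3P [tS ut vt]].
rewrite /is_simplex set2_ne0 /=; apply/existsP; exists t; rewrite tS /=.
exact: set2_sub.
Qed.

Lemma edge_in_simplex {V : finType} (S2 : {set {set V}}) ori (C : collection V) s u v :
  closed_oriented_surface S2 ori -> framed_small_collection S2 C -> is_simplex S2 s ->
  u \in s -> v \in s -> u != v -> [set u; v] \proper s ->
  edge_or C u v = if cyc (bold C s u) (bold C s v) (other #|s| (bold C s u))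
                  then 1%R else (-1)%R.
Proof.
move=> hsurf hC hs us vs uv pr.
have he : is_simplex S2 [set u; v] by apply: (edge_simplex (edge_of_simplex hs us vs uv)).
have sme := fsc_small hsurf hC he.
have sms := fsc_small hsurf hC hs.
have hC' := hC; case: hC' => hm [_ [_ [_ hb]]].
apply: (edge_or_face uv sme sms (hm _ _ he hs pr)).
- by apply: hb => //; apply: in2l.
- by apply: hb => //; apply: in2r.
Qed.

Lemma npos_G3 {V : finType} (t : {set V}) s b x y z :
  smallP t s b -> #|t| = 3 -> x \in t -> y \in t -> z \in t ->
  npos s x y z = G3 id (b x %% 3) (b y %% 3) (b z %% 3) /\
  nneg s x y z = G3 negb (b x %% 3) (b y %% 3) (b z %% 3).
Proof.
move=> h c3 xt yt zt.
have E : forall i c, c \in t -> i < 6 -> (onth s i == Some c) = (i %% 3 == b c %% 3).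
  move=> i c ct il; have [bl bo] := small_bold h ct.
  case: h => hsz _ hres _ _; rewrite c3 in hsz hres.
  by rewrite -bo hres // hsz.
case: (h) => hsz _ _ _ _; rewrite c3 in hsz.
rewrite /npos /nneg /G3 hsz; split;
apply: eq_bigr => i _; apply: eq_bigr => j _; apply: eq_bigr => k _;
by rewrite (E i x) // (E j y) // (E k z).
Qed.

Lemma chk2P bx by_ bz : bx < 6 -> by_ < 6 -> bz < 6 ->
  bx %% 3 != by_ %% 3 -> bx %% 3 != bz %% 3 -> by_ %% 3 != bz %% 3 ->
  let d := (Aof by_ bz - Aof bx bz + Aof bx by_)%R in
  [|| [&& G3 negb (bx %% 3) (by_ %% 3) (bz %% 3) == 2%N, G3 id (bx %% 3) (by_ %% 3) (bz %% 3) == 6%N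
       & (d == 1%R) || (d == (-3)%R)]
    | [&& G3 negb (bx %% 3) (by_ %% 3) (bz %% 3) == 6%N, G3 id (bx %% 3) (by_ %% 3) (bz %% 3) == 2%N
       & (d == (-1)%R) || (d == 3%R)]].
Proof.
move=> hx hy hz n1 n2 n3; rewrite !G3E.
have := chk2_ok; rewrite /chk2.
move=> /allP /(_ bx); rewrite mem_iota hx => /(_ isT).
move=> /allP /(_ by_); rewrite mem_iota hy => /(_ isT).
move=> /allP /(_ bz); rewrite mem_iota hz => /(_ isT).
by rewrite n1 n2 n3.
Qed.

Lemma part2_tri {V : finType} (S2 : {set {set V}}) ori (C : collection V) a x y z :
  closed_oriented_surface S2 ori -> framed_small_collection S2 C ->
  (forall u v, is_edge S2 u v -> edge_or C u v = a u v) -> ori x y z ->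
  euler_cocycle C x y z = Fq (cobound a x y z).
Proof.
move=> hsurf hC ha hxyz.
have hsurf' := hsurf; case: hsurf' => _ [_ [hori _]].
have [tS c3] := hori _ _ _ hxyz.
have [xy yz xz] := card3 c3.
set t := [set x; y; z] in tS c3.
have hs : is_simplex S2 t.
  by rewrite /is_simplex; apply/andP; split; [apply/set0Pn; exists x; rewrite !inE eqxx|
     apply/existsP; exists t; rewrite tS subxx].
have xt : x \in t by rewrite !inE eqxx.
have yt : y \in t by rewrite !inE eqxx !orbT.
have zt : z \in t by rewrite !inE eqxx !orbT.
have pr : forall u v, u \in t -> v \in t -> [set u; v] \proper t.
  move=> u v ut vt; rewrite properEcard set2_sub //= c3.
  by rewrite cards2; case: (u != v).
have h := fsc_small hsurf hC hs.
have EA : forall u v, u \in t -> v \in t -> u != v -> a u v = Aof (bold C t u) (bold C t v).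
  move=> u v ut vt uv; rewrite -ha; last by apply: (edge_of_simplex hs).
  by rewrite (edge_in_simplex hsurf hC hs ut vt uv (pr u v ut vt)) c3.
rewrite /cobound (EA y z) // (EA x z) // (EA x y) //.
have [np nn] := npos_G3 h c3 xt yt zt.
rewrite /euler_cocycle -/t np nn.
have [hC1 [_ [hsm _]]] := hC.
have [_ hcnt _] := hsm _ hs.
rewrite !hcnt //.
have [bxl bxo] := small_bold h xt.
have [byl byo] := small_bold h yt.
have [bzl bzo] := small_bold h zt.
case: (h) => hsz _ hres _ _; rewrite c3 in hsz hres.
have NE : forall u v, u \in t -> v \in t -> u != v -> bold C t u %% 3 != bold C t v %% 3.
  move=> u v ut vt uv; have [ul uo] := small_bold h ut; have [vl vo] := small_bold h vt.
  by rewrite -hres // uo vo (inj_eq (@Some_inj _)).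
rewrite hsz in bxl byl bzl.
have := chk2P bxl byl bzl (NE _ _ xt yt xy) (NE _ _ xt zt xz) (NE _ _ yt zt yz).
move: (Aof _ _ - _ + _)%R => d.
case/orP => /and3P [/eqP -> /eqP -> /orP [] /eqP ->]; by apply/eqP; vm_compute.
Qed.


Definition chk3 := all (fun bx => all (fun by_ => all (fun bz =>
  all (fun cx => all (fun cy => all (fun cz =>
  (bx %% 3 != by_ %% 3) ==> (bx %% 3 != bz %% 3) ==> (by_ %% 3 != bz %% 3) ==>
  (cx %% 3 != cy %% 3) ==> (cx %% 3 != cz %% 3) ==> (cy %% 3 != cz %% 3) ==>
  (Aof bx by_ == Aof cx cy) ==> (Aof by_ bz == Aof cy cz) ==> (Aof bx bz == Aof cx cz) ==>
  (cy == (by_ + (cx + 6 - bx) %% 6) %% 6) && (cz == (bz + (cx + 6 - bx) %% 6) %% 6))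
  (iota 0 6)) (iota 0 6)) (iota 0 6)) (iota 0 6)) (iota 0 6)) (iota 0 6).

Lemma chk3_ok : chk3. Proof. vm_compute. reflexivity. Qed.

Lemma chk3P bx by_ bz cx cy cz : bx < 6 -> by_ < 6 -> bz < 6 -> cx < 6 -> cy < 6 -> cz < 6 ->
  bx %% 3 != by_ %% 3 -> bx %% 3 != bz %% 3 -> by_ %% 3 != bz %% 3 ->
  cx %% 3 != cy %% 3 -> cx %% 3 != cz %% 3 -> cy %% 3 != cz %% 3 ->
  Aof bx by_ = Aof cx cy -> Aof by_ bz = Aof cy cz -> Aof bx bz = Aof cx cz ->
  cy = (by_ + (cx + 6 - bx) %% 6) %% 6 /\ cz = (bz + (cx + 6 - bx) %% 6) %% 6.
Proof.
move=> h1 h2 h3 h4 h5 h6 n1 n2 n3 n4 n5 n6 e1 e2 e3.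
have := chk3_ok; rewrite /chk3.
move=> /allP /(_ bx); rewrite mem_iota h1 => /(_ isT).
move=> /allP /(_ by_); rewrite mem_iota h2 => /(_ isT).
move=> /allP /(_ bz); rewrite mem_iota h3 => /(_ isT).
move=> /allP /(_ cx); rewrite mem_iota h4 => /(_ isT).
move=> /allP /(_ cy); rewrite mem_iota h5 => /(_ isT).
move=> /allP /(_ cz); rewrite mem_iota h6 => /(_ isT).
by rewrite n1 n2 n3 n4 n5 n6 e1 e2 e3 !eqxx /= => /andP [/eqP -> /eqP ->].
Qed.

Definition cycrot_chk N := all (fun i => all (fun j => all (fun k => all (fun d =>
   cyc ((i + d) %% N) ((j + d) %% N) ((k + d) %% N) == cyc i j k) (iota 0 N)) (iota 0 N)) (iota 0 N)) (iota 0 N).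

Lemma cycrot_ok k : (0 < k <= 3)%N -> cycrot_chk (2 * k).
Proof. by move=> hk; case: (k123 hk) => [->|[->|->]]; vm_compute. Qed.

Lemma cyc_rot k i j l d : (0 < k <= 3)%N -> i < 2 * k -> j < 2 * k -> l < 2 * k -> d < 2 * k ->
  cyc ((i + d) %% (2 * k)) ((j + d) %% (2 * k)) ((l + d) %% (2 * k)) = cyc i j l.
Proof.
move=> hk hi hj hl hd; have := cycrot_ok hk; rewrite /cycrot_chk.
move=> /allP /(_ i); rewrite mem_iota hi => /(_ isT).
move=> /allP /(_ j); rewrite mem_iota hj => /(_ isT).
move=> /allP /(_ l); rewrite mem_iota hl => /(_ isT).
by move=> /allP /(_ d); rewrite mem_iota hd => /(_ isT) /eqP.
Qed.

Lemma rot2 a b a' b' : a < 4 -> b < 4 -> a' < 4 -> b' < 4 -> a %% 2 != b %% 2 -> a' %% 2 != b' %% 2 ->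
  cyc a b (other 2 a) = cyc a' b' (other 2 a') -> b' = (b + (a' + 4 - a) %% 4) %% 4.
Proof. rewrite /other /cyc. lia. Qed.

Lemma card3P {V : finType} (s : {set V}) : #|s| = 3 -> exists x y z : V, s = [set x; y; z].
Proof.
rewrite cardE; case e: (enum s) => [|x [|y [|z [|]]]] // _.
exists x, y, z; apply/setP => w; by rewrite -mem_enum e !inE orbA.
Qed.


Lemma res_ne {V : finType} (t : {set V}) s b u v :
  smallP t s b -> u \in t -> v \in t -> u != v -> b u %% #|t| != b v %% #|t|.
Proof.
move=> h ut vt uv; have [ul uo] := small_bold h ut; have [vl vo] := small_bold h vt.
case: h => _ _ hres _ _.
by rewrite -hres // uo vo (inj_eq (@Some_inj _)).
Qed.

Lemma pm1_inj (b1 b2 : bool) :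
  ((if b1 then 1%R else (-1)%R) : int) = (if b2 then 1%R else (-1)%R) -> b1 = b2.
Proof. by case: b1; case: b2. Qed.

Lemma proper3 {V : finType} (s : {set V}) u v : #|s| = 3 -> u \in s -> v \in s ->
  [set u; v] \proper s.
Proof.
move=> c3 ut vt; rewrite properEcard set2_sub //= c3.
by rewrite cards2; case: (u != v).
Qed.

Lemma in3 {V : finType} (x y z : V) :
  [/\ x \in [set x; y; z], y \in [set x; y; z] & z \in [set x; y; z]].
Proof. by rewrite !inE !eqxx !orbT. Qed.

Lemma phi_rot {V : finType} (S2 : {set {set V}}) ori (C C' : collection V) s :
  closed_oriented_surface S2 ori -> framed_small_collection S2 C -> framed_small_collection S2 C' ->
  (forall x y, is_edge S2 x y -> edge_or C x y = edge_or C' x y) -> is_simplex S2 s ->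
  exists2 d, d < 2 * #|s| & forall c, c \in s -> bold C' s c = (bold C s c + d) %% (2 * #|s|).
Proof.
move=> hsurf hC hC' hE hs.
have h := fsc_small hsurf hC hs; have h' := fsc_small hsurf hC' hs.
have hk := simplex_card hsurf hs.
case: (k123 hk) => [k1|[k2|k3]].
- have /cards1P [v sv] : #|s| == 1 by rewrite k1.
  have vs : v \in s by rewrite sv inE.
  have [bl _] := small_bold h vs; have [bl' _] := small_bold h' vs.
  case: h => hsz _ _ _ _; case: h' => hsz' _ _ _ _.
  rewrite k1 in hsz hsz' *; rewrite hsz in bl; rewrite hsz' in bl'.
  exists ((bold C' s v + 2 - bold C s v) %% 2); first by apply: ltn_pmod.
  move=> c cs; have /eqP -> : c == v by move: cs; rewrite sv inE.
  lia.
- have /cards2P [x [y [xy sxy]]] : #|s| == 2 by rewrite k2.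
  have xs : x \in s by rewrite sxy in2l.
  have ys : y \in s by rewrite sxy in2r.
  have [bxl _] := small_bold h xs; have [bxl' _] := small_bold h' xs.
  have [byl _] := small_bold h ys; have [byl' _] := small_bold h' ys.
  have r1 := res_ne h xs ys xy; have r2 := res_ne h' xs ys xy.
  have hxy : is_edge S2 x y by apply: (edge_of_simplex hs).
  have := hE _ _ hxy.
  have hs2 := h; have hs2' := h'; rewrite sxy in hs2 hs2'.
  rewrite (edge_or_small xy hs2) (edge_or_small xy hs2') -sxy => /pm1_inj hc.
  case: h => hsz _ _ _ _; case: h' => hsz' _ _ _ _.
  rewrite k2 in hsz hsz' r1 r2 *; rewrite hsz in bxl byl; rewrite hsz' in bxl' byl'.
  exists ((bold C' s x + 4 - bold C s x) %% 4); first by apply: ltn_pmod.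
  move=> c cs; have : (c == x) || (c == y) by move: cs; rewrite sxy !inE.
  case/orP => /eqP ->; first by lia.
  exact: (rot2 bxl byl bxl' byl' r1 r2 hc).
- have [x [y [z sxyz]]] := card3P k3.
  have [xy yz xz] : [/\ x != y, y != z & x != z] by apply: card3; rewrite -sxyz.
  have [xs ys zs] : [/\ x \in s, y \in s & z \in s] by rewrite sxyz; apply: in3.
  have EA : forall u v, u \in s -> v \in s -> u != v ->
      Aof (bold C s u) (bold C s v) = Aof (bold C' s u) (bold C' s v).
    move=> u v us vs uv.
    have := hE _ _ (edge_of_simplex hs us vs uv).
    rewrite (edge_in_simplex hsurf hC hs us vs uv (proper3 k3 us vs)).
    by rewrite (edge_in_simplex hsurf hC' hs us vs uv (proper3 k3 us vs)) k3.
  have [bxl _] := small_bold h xs; have [bxl' _] := small_bold h' xs.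
  have [byl _] := small_bold h ys; have [byl' _] := small_bold h' ys.
  have [bzl _] := small_bold h zs; have [bzl' _] := small_bold h' zs.
  have r1 := res_ne h xs ys xy; have r2 := res_ne h' xs ys xy.
  have r3 := res_ne h xs zs xz; have r4 := res_ne h' xs zs xz.
  have r5 := res_ne h ys zs yz; have r6 := res_ne h' ys zs yz.
  case: h => hsz _ _ _ _; case: h' => hsz' _ _ _ _.
  rewrite k3 in hsz hsz' r1 r2 r3 r4 r5 r6 *.
  rewrite hsz in bxl byl bzl; rewrite hsz' in bxl' byl' bzl'.
  have [ey ez] := chk3P bxl byl bzl bxl' byl' bzl' r1 r3 r5 r2 r4 r6
      (EA _ _ xs ys xy) (EA _ _ ys zs yz) (EA _ _ xs zs xz).
  exists ((bold C' s x + 6 - bold C s x) %% 6); first by apply: ltn_pmod.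
  move=> c cs; have : [|| c == x, c == y | c == z] by move: cs; rewrite sxyz !inE orbA.
  case/or3P => /eqP -> //; lia.
Qed.

Lemma phi_is_rot {V : finType} (t : {set V}) s1 s2 b1 b2 d :
  smallP t s1 b1 -> smallP t s2 b2 ->
  (forall c, c \in t -> b2 c = (b1 c + d) %% (2 * #|t|)) ->
  forall i, i < size s1 -> transport s1 b1 #|t| b2 i = (i + d) %% (2 * #|t|).
Proof.
move=> h1 h2 hr i il.
have [c hc] : exists c, onth s1 i = Some c.
  by rewrite -onthTE in il; case: (onth s1 i) il => // c; exists c.
have [_ _ _ ->] := transport_val h1 h2 (subxx t) hc.
case: (small_bead h1 hc) => ct [E|E].
  by rewrite E eqxx hr.
have [_ _ ne] := small_other h1 ct.
rewrite E (negbTE ne) hr // /other.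
have [bl _] := small_bold h1 ct.
case: (h1) => hsz hk _ _ _; rewrite hsz in bl.
by case: (k123 hk) => [e|[e|e]]; rewrite e in bl *; lia.
Qed.


Lemma onth_col {T : Type} (s : seq T) i : i < size s -> exists c, onth s i = Some c.
Proof. by rewrite -onthTE; case: (onth s i) => // c; exists c. Qed.

Lemma partA {V : finType} (S2 : {set {set V}}) ori (C : collection V) :
  closed_oriented_surface S2 ori -> framed_small_collection S2 C -> is_orientation S2 (edge_or C).
Proof.
move=> hsurf hC x y hxy.
have xy : x != y by case/andP: hxy.
exact: (edge_or_anti xy (fsc_small hsurf hC (edge_simplex hxy))).
Qed.

Lemma partB {V : finType} (S2 : {set {set V}}) ori (C C' : collection V) :
  closed_oriented_surface S2 ori -> framed_small_collection S2 C -> framed_small_collection S2 C' ->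
  iso_collection S2 C C' -> forall x y, is_edge S2 x y -> edge_or C x y = edge_or C' x y.
Proof.
move=> hsurf hC hC' [phi hphi] x y hxy.
have xy : x != y by case/andP: hxy.
have he := edge_simplex hxy.
have h := fsc_small hsurf hC he; have h' := fsc_small hsurf hC' he.
have [_ [hm [hb _]]] := hphi _ he.
rewrite (edge_or_small xy h) (edge_or_small xy h').
have c2 : #|[set x; y]| = 2 by rewrite cards2 xy.
have fo := morph_other hm h h' (in2l x y) (hb _ (in2l x y)).
rewrite c2 in fo.
have [ol _ _] := small_other h (in2l x y).
have [bxl _] := small_bold h (in2l x y).
have [byl _] := small_bold h (in2r x y).
rewrite c2 in ol.
case: hm => _ [_ [_ [_ hc]]].
by rewrite -fo -(hb _ (in2l x y)) -(hb _ (in2r x y)) hc.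
Qed.

Lemma partC {V : finType} (S2 : {set {set V}}) ori (C C' : collection V) :
  closed_oriented_surface S2 ori -> framed_small_collection S2 C -> framed_small_collection S2 C' ->
  (forall x y, is_edge S2 x y -> edge_or C x y = edge_or C' x y) -> iso_collection S2 C C'.
Proof.
move=> hsurf hC hC' hE.
exists (fun s => transport (neck C s) (bold C s) #|s| (bold C' s)) => s hs.
have h := fsc_small hsurf hC hs; have h' := fsc_small hsurf hC' hs.
have hk := simplex_card hsurf hs.
split; first by case: h => -> _ _ _ _; case: h' => -> _ _ _ _.
split.
  apply: (transport_morph h h' (subxx s)) => i j l il jl ll.
  have [d dl hr] := phi_rot hsurf hC hC' hE hs.
  have sz : size (neck C s) = 2 * #|s| by case: h.
  rewrite !(phi_is_rot h h' hr) //.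
  by apply: cyc_rot => //; rewrite -sz.
split.
  move=> v vs; have [_ bo] := small_bold h vs.
  by have [_ _ _ ->] := transport_val h h' (subxx s) bo; rewrite eqxx.
move=> t ht pts i il.
have hT := fsc_small hsurf hC ht; have hT' := fsc_small hsurf hC' ht.
have sts : t \subset s by apply: proper_sub.
have [c hc] := onth_col il.
have ct : c \in t by case: (small_bead hT hc).
have cs : c \in s by apply: (subsetP sts).
have hC1 := hC; have hC1' := hC'.
case: hC1 => hm [_ [_ [_ hb]]]; case: hC1' => hm' [_ [_ [_ hb']]].
have mt := hm _ _ ht hs pts; have mt' := hm' _ _ ht hs pts.
rewrite (morph_val mt hT h (hb _ _ _ ht hs pts ct) hc).
have [_ _ _ ->] := transport_val hT hT' (subxx t) hc.
case: eqP => _.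
- have [_ bo] := small_bold h cs.
  have [_ _ _ ->] := transport_val h h' (subxx s) bo; rewrite eqxx.
  by rewrite (hb' _ _ _ ht hs pts ct).
- have [_ oo ne] := small_other h cs.
  have [_ _ _ ->] := transport_val h h' (subxx s) oo; rewrite (negbTE ne).
  by rewrite (morph_other mt' hT' h' ct (hb' _ _ _ ht hs pts ct)).
Qed.

Lemma part2 {V : finType} (S2 : {set {set V}}) ori (C : collection V) a :
  closed_oriented_surface S2 ori -> framed_small_collection S2 C ->
  (forall x y, is_edge S2 x y -> edge_or C x y = a x y) ->
  represents_euler_class S2 ori C (fun x y z => Fq (cobound a x y z)).
Proof.
move=> hsurf hC ha.
exists (fun _ _ => 0%R); split; first by move=> *; rewrite oppr0.
move=> x y z hxyz; rewrite (part2_tri hsurf hC ha hxyz).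
by rewrite /cobound subrr !addr0.
Qed.


Definition wD {V : finType} (a : V -> V -> int) (t : {set V}) : seq V :=
  match enum t with
  | [:: x; y; z] => if a y z == (a x y * a x z)%R then [:: x; y; z] else [:: x; z; y]
  | s => s end.

Definition neckD {V : finType} (a : V -> V -> int) (t : {set V}) : seq V := wD a t ++ wD a t.

Definition boldD {V : finType} (a : V -> V -> int) (t : {set V}) (c : V) : nat :=
  match enum t with
  | [:: x] => 0
  | [:: x; y] => if c == x then 0 else if a x y == 1%R then 1 else 3
  | [:: x; y; z] =>
    if a y z == (a x y * a x z)%R then
      (if c == x then 0 else if c == y then (if a x y == 1%R then 1 else 4)
       else (if a x z == 1%R then 2 else 5))
    else (if c == x then 0 else if c == z then (if a x z == 1%R then 1 else 4)
       else (if a x y == 1%R then 2 else 5))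
  | _ => 0 end.

Lemma wD_perm {V : finType} (a : V -> V -> int) t : perm_eq (wD a t) (enum t).
Proof.
rewrite /wD; case: (enum t) => [|x [|y [|z [|w l]]]] //; case: ifP => _ //.
by rewrite perm_cons (perm_catC [:: z] [:: y]).
Qed.

Lemma neckD_props {V : finType} (a : V -> V -> int) (t : {set V}) :
  [/\ all (fun c => c \in t) (neckD a t), forall v, v \in t -> count_mem v (neckD a t) = 2
    & rot (size (neckD a t) %/ 2) (neckD a t) = neckD a t].
Proof.
have hp := wD_perm a t.
have hu : uniq (wD a t) by rewrite (perm_uniq hp) enum_uniq.
have hm : forall c, (c \in wD a t) = (c \in t) by move=> c; rewrite (perm_mem hp) mem_enum.
split.
- by apply/allP => c; rewrite /neckD mem_cat orbb hm.
- by move=> v vt; rewrite /neckD count_cat (count_uniq_mem _ hu) hm vt.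
- by rewrite /neckD size_cat addnn -mul2n mulKn // rot_size_cat.
Qed.

Lemma boldD_ok {V : finType} (a : V -> V -> int) (t : {set V}) c :
  (0 < #|t| <= 3)%N -> c \in t ->
  boldD a t c < size (neckD a t) /\ onth (neckD a t) (boldD a t c) = Some c.
Proof.
move=> hk; rewrite -mem_enum /neckD /wD /boldD.
have := enum_uniq t; rewrite cardE in hk.
case: (enum t) hk => [|x [|y [|z [|w l]]]] //= _.
- by move=> _; rewrite inE => /eqP ->.
- rewrite !inE andbT => xy /orP [] /eqP ->; rewrite ?eqxx //.
  by rewrite (eq_sym y x) (negbTE xy); case: ifP.
- rewrite !inE !negb_or andbT => /andP [/andP [xy xz] yz] /or3P [] /eqP ->.
  + by rewrite eqxx; case: ifP.
  + by rewrite (eq_sym y x) (negbTE xy) eqxx (negbTE yz); case: ifP => _; case: ifP.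
  + rewrite (eq_sym z x) (negbTE xz) (eq_sym z y) (negbTE yz) eqxx.
    by case: ifP => _; case: ifP.
Qed.

Lemma smallD {V : finType} (a : V -> V -> int) (t : {set V}) :
  (0 < #|t| <= 3)%N -> smallP t (neckD a t) (boldD a t).
Proof.
move=> hk; have [hall hcnt hrot] := neckD_props a t.
have [hsz hres] := small_struct (proj1 (andP hk)) hall hcnt hrot.
split => //.
- by move=> i c /onth_mem; apply: (allP hall).
- by move=> c; apply: boldD_ok.
Qed.


Definition antiP {V : finType} (a : V -> V -> int) (t : {set V}) :=
  forall p q, p \in t -> q \in t -> p != q ->
    a q p = (- a p q)%R /\ (a p q = 1%R \/ a p q = (-1)%R).

Lemma enum2 {V : finType} (t : {set V}) : #|t| = 2 ->
  exists x y, [/\ x != y, enum t = [:: x; y], x \in t & y \in t].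
Proof.
move=> c2; have := enum_uniq t; have := mem_enum t; rewrite cardE in c2.
case: (enum t) c2 => [|x [|y [|z l]]] // _ hm.
rewrite /= inE andbT => xy; exists x, y; split => //.
- by rewrite -hm inE eqxx.
- by rewrite -hm !inE eqxx orbT.
Qed.

Lemma enum3 {V : finType} (t : {set V}) : #|t| = 3 ->
  exists x y z, [/\ [/\ x != y, x != z & y != z], enum t = [:: x; y; z],
                    x \in t, y \in t & z \in t].
Proof.
move=> c3; have := enum_uniq t; have := mem_enum t; rewrite cardE in c3.
case: (enum t) c3 => [|x [|y [|z [|w l]]]] // _ hm.
rewrite /= !inE !negb_or andbT => /andP [/andP [xy xz] yz]; exists x, y, z; split => //.
- by rewrite -hm inE eqxx.
- by rewrite -hm !inE eqxx orbT.
- by rewrite -hm !inE eqxx !orbT.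
Qed.

Lemma edgeD_cyc {V : finType} (a : V -> V -> int) (t : {set V}) u v :
  #|t| = 2 -> antiP a t -> u \in t -> v \in t -> u != v ->
  cyc (boldD a t u) (boldD a t v) (other 2 (boldD a t u)) = (a u v == 1%R).
Proof.
move=> c2 ha ut vt uv.
have [x [y [xy te xt yt]]] := enum2 c2.
have ut' := ut; have vt' := vt.
rewrite -mem_enum te !inE in ut'; rewrite -mem_enum te !inE in vt'.
rewrite /boldD te.
have [ayx hxy] := ha x y xt yt xy.
case/orP: ut' => /eqP eu; case/orP: vt' => /eqP ev; subst u v; rewrite ?eqxx in uv => //.
- rewrite eqxx (eq_sym y x) (negbTE xy).
  by case: hxy => ->.
- rewrite eqxx (eq_sym y x) (negbTE xy) ayx.
  by case: hxy => ->.
Qed.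

Lemma triD_cyc {V : finType} (a : V -> V -> int) (t : {set V}) u v :
  #|t| = 3 -> antiP a t -> u \in t -> v \in t -> u != v ->
  cyc (boldD a t u) (boldD a t v) (other 3 (boldD a t u)) = (a u v == 1%R).
Proof.
move=> c3 ha ut vt uv.
have [x [y [z [[xy xz yz] te xt yt zt]]]] := enum3 c3.
have ut' := ut; have vt' := vt.
rewrite -mem_enum te !inE in ut'; rewrite -mem_enum te !inE in vt'.
rewrite /boldD te.
have [ayx hxy] := ha x y xt yt xy.
have [azx hxz] := ha x z xt zt xz.
have [azy hyz] := ha y z yt zt yz.
have e1 := negbTE xy; have e2 := negbTE xz; have e3 := negbTE yz.
have e4 : (y == x) = false by rewrite eq_sym.
have e5 : (z == x) = false by rewrite eq_sym.
have e6 : (z == y) = false by rewrite eq_sym.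
case/or3P: ut' => /eqP eu; case/or3P: vt' => /eqP ev; subst u v; rewrite ?eqxx in uv => //;
  rewrite ?eqxx ?e1 ?e2 ?e3 ?e4 ?e5 ?e6 ?ayx ?azx ?azy;
  by case: hxy => ->; case: hxz => ->; case: hyz => ->.
Qed.

Definition G4 (bu bv cu cv i : nat) : nat :=
  if i %% 2 == bu %% 2 then (if i == bu then cu else other 3 cu)
  else (if i == bv then cv else other 3 cv).

Definition chk4 := all (fun bu => all (fun bv => all (fun cu => all (fun cv =>
  (bu %% 2 != bv %% 2) ==> (cu %% 3 != cv %% 3) ==>
  (cyc bu bv (other 2 bu) == cyc cu cv (other 3 cu)) ==>
  all (fun i => all (fun j => all (fun l =>
     cyc (G4 bu bv cu cv i) (G4 bu bv cu cv j) (G4 bu bv cu cv l) == cyc i j l)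
     (iota 0 4)) (iota 0 4)) (iota 0 4))
  (iota 0 6)) (iota 0 6)) (iota 0 4)) (iota 0 4).

Lemma chk4_ok : chk4. Proof. vm_compute. reflexivity. Qed.

Lemma chk4P bu bv cu cv i j l : bu < 4 -> bv < 4 -> cu < 6 -> cv < 6 ->
  bu %% 2 != bv %% 2 -> cu %% 3 != cv %% 3 ->
  cyc bu bv (other 2 bu) = cyc cu cv (other 3 cu) -> i < 4 -> j < 4 -> l < 4 ->
  cyc (G4 bu bv cu cv i) (G4 bu bv cu cv j) (G4 bu bv cu cv l) = cyc i j l.
Proof.
move=> h1 h2 h3 h4 n1 n2 e hi hj hl.
have := chk4_ok; rewrite /chk4.
move=> /allP /(_ bu); rewrite mem_iota h1 => /(_ isT).
move=> /allP /(_ bv); rewrite mem_iota h2 => /(_ isT).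
move=> /allP /(_ cu); rewrite mem_iota h3 => /(_ isT).
move=> /allP /(_ cv); rewrite mem_iota h4 => /(_ isT).
rewrite n1 n2 e eqxx.
move=> /allP /(_ i); rewrite mem_iota hi => /(_ isT).
move=> /allP /(_ j); rewrite mem_iota hj => /(_ isT).
by move=> /allP /(_ l); rewrite mem_iota hl => /(_ isT) /eqP.
Qed.


Definition CD {V : finType} (a : V -> V -> int) : collection V :=
  Collection (neckD a) (fun t s => transport (neckD a t) (boldD a t) #|s| (boldD a s)) (boldD a).

Lemma anti_of {V : finType} (S2 : {set {set V}}) a s :
  is_orientation S2 a -> is_simplex S2 s -> antiP a s.
Proof.
move=> ha hs p q ps qs pq; have [h1 h2] := ha p q (edge_of_simplex hs ps qs pq).
by split.
Qed.

Lemma cyc_e12 i l : cyc i i l = false. Proof. rewrite /cyc; lia. Qed.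
Lemma cyc_e23 i j : cyc i j j = false. Proof. rewrite /cyc; lia. Qed.
Lemma cyc_e13 i j : cyc i j i = false. Proof. rewrite /cyc; lia. Qed.

Lemma morD {V : finType} (S2 : {set {set V}}) ori a t s :
  closed_oriented_surface S2 ori -> is_orientation S2 a -> is_simplex S2 t -> is_simplex S2 s ->
  t \proper s ->
  neck_morphism t (neckD a t) (neckD a s) (transport (neckD a t) (boldD a t) #|s| (boldD a s)).
Proof.
move=> hsurf ha ht hs pts.
have kt := simplex_card hsurf ht; have ks := simplex_card hsurf hs.
have h1 := smallD a kt; have h2 := smallD a ks.
have sts := proper_sub pts.
have lt := proper_card pts.
apply: (transport_morph h1 h2 sts) => i j l il jl ll.
have sz : size (neckD a t) = 2 * #|t| by case: h1.
case: (k123 kt) => [k1|[k2|k3]].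
- rewrite sz k1 in il jl ll.
  have : i = j \/ j = l \/ i = l by lia.
  by case=> [e|[e|e]]; rewrite e ?cyc_e12 ?cyc_e23 ?cyc_e13.
- have k3 : #|s| = 3 by lia.
  have [u [v [uv te ut vt]]] := enum2 k2.
  have us : u \in s by apply: (subsetP sts).
  have vs : v \in s by apply: (subsetP sts).
  have [bul buo] := small_bold h1 ut; have [bvl bvo] := small_bold h1 vt.
  have [cul cuo] := small_bold h2 us; have [cvl cvo] := small_bold h2 vs.
  have r1 := res_ne h1 ut vt uv; have r2 := res_ne h2 us vs uv.
  rewrite k2 in r1; rewrite k3 in r2.
  have key : forall m, m < size (neckD a t) ->
      transport (neckD a t) (boldD a t) #|s| (boldD a s) m =
      G4 (boldD a t u) (boldD a t v) (boldD a s u) (boldD a s v) m.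
    move=> m ml; have [c hc] := onth_col ml.
    have [_ _ _ ->] := transport_val h1 h2 sts hc.
    have ct : c \in t by case: (small_bead h1 hc).
    have : (c == u) || (c == v) by rewrite -mem_enum te !inE in ct.
    case: (h1) => _ _ hres _ _.
    rewrite /G4 k3; case/orP => /eqP ec; subst c.
    + by rewrite -k2 -hres // hc buo eqxx.
    + have e : m %% 2 = boldD a t v %% 2 by apply/eqP; rewrite -k2 -hres // hc bvo.
      by rewrite e (eq_sym (boldD a t v %% 2)) (negbTE r1).
  rewrite !key //.
  rewrite sz k2 in il jl ll bul bvl; case: (h2) => hsz _ _ _ _; rewrite hsz k3 in cul cvl.
  apply: chk4P => //.
  rewrite (edgeD_cyc k2 (anti_of ha ht) ut vt uv).
  by rewrite (triD_cyc k3 (anti_of ha hs) us vs uv).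
- lia.
Qed.

Lemma fscD {V : finType} (S2 : {set {set V}}) ori a :
  closed_oriented_surface S2 ori -> is_orientation S2 a -> framed_small_collection S2 (CD a).
Proof.
move=> hsurf ha.
split; first by move=> t s ht hs pts; apply: (morD hsurf ha ht hs pts).
split.
  move=> t r s ht hr hs ptr prs i il /=.
  have h1 := smallD a (simplex_card hsurf ht).
  have h2 := smallD a (simplex_card hsurf hr).
  have h3 := smallD a (simplex_card hsurf hs).
  have s12 := proper_sub ptr; have s23 := proper_sub prs.
  have s13 := subset_trans s12 s23.
  have [c hc] := onth_col il.
  have [_ o1 q1 _] := transport_val h1 h2 s12 hc.
  have [_ _ _ ->] := transport_val h2 h3 s23 o1.
  have [_ _ _ ->] := transport_val h1 h3 s13 hc.
  by rewrite q1.
split; first by move=> s hs; apply: neckD_props.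
split; first by move=> s v hs vs; apply: boldD_ok => //; apply: (simplex_card hsurf hs).
move=> t s v ht hs pts vt /=.
have h1 := smallD a (simplex_card hsurf ht).
have h2 := smallD a (simplex_card hsurf hs).
have [_ bo] := small_bold h1 vt.
by have [_ _ _ ->] := transport_val h1 h2 (proper_sub pts) bo; rewrite eqxx.
Qed.

Lemma partD {V : finType} (S2 : {set {set V}}) ori a :
  closed_oriented_surface S2 ori -> is_orientation S2 a ->
  exists C, framed_small_collection S2 C /\
    forall x y, is_edge S2 x y -> edge_or C x y = a x y.
Proof.
move=> hsurf ha; exists (CD a); split; first exact: (fscD hsurf ha).
move=> x y hxy.
have xy : x != y by case/andP: hxy.
have he := edge_simplex hxy.
have k := simplex_card hsurf he.
have h := smallD a k.
rewrite (@edge_or_small _ (CD a) x y xy h) /=.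
have c2 : #|[set x; y]| = 2 by rewrite cards2 xy.
rewrite (edgeD_cyc c2 (anti_of ha he) (in2l x y) (in2r x y) xy).
by have [[->|->] _] := ha x y hxy.
Qed.

Unset Implicit Arguments. Set Strict Implicit. Set Printing Implicit Defensive.

Theorem mainTheorem9 (V : finType) (S2 : {set {set V}})
    (ori : V -> V -> V -> bool) :
  closed_oriented_surface S2 ori ->
  (* (1) collections up to isomorphism  <->  Or(B), via edge_or *)
  [/\ (forall C, framed_small_collection S2 C -> is_orientation S2 (edge_or C)),
      (forall C C', framed_small_collection S2 C -> framed_small_collection S2 C' ->
         iso_collection S2 C C' ->
         forall x y, is_edge S2 x y -> edge_or C x y = edge_or C' x y),
      (forall C C', framed_small_collection S2 C -> framed_small_collection S2 C' ->
         (forall x y, is_edge S2 x y -> edge_or C x y = edge_or C' x y) ->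
         iso_collection S2 C C'),
      (forall a, is_orientation S2 a ->
         exists C, framed_small_collection S2 C /\
           forall x y, is_edge S2 x y -> edge_or C x y = a x y)
  (* (2) F(da) represents the Euler class *)
    & (forall a C, is_orientation S2 a -> framed_small_collection S2 C ->
         (forall x y, is_edge S2 x y -> edge_or C x y = a x y) ->
         represents_euler_class S2 ori C (fun x y z => Fq (cobound a x y z)))].
Proof.
move=> hsurf; split.
- by move=> C hC; apply: (partA hsurf hC).
- by move=> C C' hC hC' hi; apply: (partB hsurf hC hC' hi).
- by move=> C C' hC hC' hE; apply: (partC hsurf hC hC' hE).
- by move=> a ha; apply: (partD hsurf ha).
- by move=> a C ha hC hE; apply: (part2 hsurf hC hE).
Qed.
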